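(* Let $G$ be a group acting on a ring $A$ from the right, $a\mapsto a^g$, such that each map $a\mapsto a^g$ is a ring automorphism. (a) For all $a,b\in A$ and $g\in G$: $[D^1(ab)](g)=a^g\cdot[D^1b](g)+[D^1a](g)\cdot b$. (b) Let $m,n\in\mathbb Z_+$ with $m+n\ge1$. If $a,b\in A$ satisfy $D^ma=0$ and $D^nb=0$, then $D^{m+n-1}(ab)=0$. Equivalently, $ab\in\mathcal P_{m+n}(G,A)$ whenever $a\in\mathcal P_m(G,A)$ and $b\in\mathcal P_n(G,A)$. In particular, the set $\mathcal P(G,A)=\bigcup_{n\ge0}\mathcal P_n(G,A)$ of all polynomial-like elements is a subring of $A$. (c) For each $n\in\mathbb N$, $D^n$ is $A^G$-linear: if $a\in A^G$ then $D^n(ab)=a\,D^nb$ for all $b\in A$.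
   Context: Right action: $a^{\mathbf e}=a$, $(a^g)^h=a^{gh}$, $\mathbf e$ the identity of $G$. $A^G=\{a:a^g=a\ \forall g\}$. $\mathcal C^0(G,A)=A$; for $n\ge1$, $\mathcal C^n(G,A)$ is the set of functions $G^n\to A$ vanishing whenever some argument is $\mathbf e$ (with pointwise operations, and $a\cdot c$ defined pointwise for $a\in A$). For $n\ge1$, $(d_nc)(g_1,\dots,g_n)=[c(g_1,\dots,g_{n-1})]^{g_n}-c(g_1,\dots,g_{n-1})$; $D^0=\mathrm{id}_A$, $D^n=d_nD^{n-1}$; $\mathcal P_n(G,A)=\ker D^{n+1}$. *)

(* Defs.v *)
From HB Require Import structures.
From mathcomp Require Import all_boot all_order all_algebra.
Set Implicit Arguments. Unset Strict Implicit. Unset Printing Implicit Defensive.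
Import GRing.Theory.
Local Open Scope ring_scope.

Record group_law (G : Type) (mul : G -> G -> G) (e : G) (inv : G -> G) : Prop := {
  gmulA : forall x y z, mul x (mul y z) = mul (mul x y) z;
  gmul1 : forall x, mul e x = x;
  gmulr1 : forall x, mul x e = x;
  gmulV : forall x, mul (inv x) x = e;
  gmulrV : forall x, mul x (inv x) = e }.

Record right_ring_action (G : Type) (mul : G -> G -> G) (e : G)
    (A : pzRingType) (act : A -> G -> A) : Prop := {
  act1 : forall a, act a e = a;
  actM : forall a g h, act (act a g) h = act a (mul g h);
  actD : forall a b g, act (a + b) g = act a g + act b g;
  actN : forall a g, act (- a) g = - act a g;
  actMr : forall a b g, act (a * b) g = act a g * act b g;
  actU : forall g, act 1 g = 1;
  act_bij : forall g, bijective (act^~ g) }.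

(* D^n a : G^n -> A, with G^n represented as 'I_n -> G.
   D^0 a = a (constant on the one-point set G^0),
   (D^(n+1) a)(g_1..g_(n+1)) = (D^n a (g_1..g_n))^(g_(n+1)) - D^n a (g_1..g_n). *)
Fixpoint Dop (G : Type) (A : pzRingType) (act : A -> G -> A) (n : nat)
    (a : A) : ('I_n -> G) -> A :=
  match n return ('I_n -> G) -> A with
  | 0 => fun _ => a
  | m.+1 => fun g =>
      let c := @Dop G A act m a (fun i : 'I_m => g (widen_ord (leqnSn m) i)) in
      act c (g ord_max) - c
  end.
Arguments Dop {G A} act n a _.

Definition Dzero (G : Type) (A : pzRingType) (act : A -> G -> A) (n : nat)
    (a : A) : Prop := forall g : 'I_n -> G, Dop act n a g = 0.

Definition Pn (G : Type) (A : pzRingType) (act : A -> G -> A) (n : nat) (a : A) : Prop :=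
  Dzero act n.+1 a.

Definition Ppoly (G : Type) (A : pzRingType) (act : A -> G -> A) (a : A) : Prop :=
  exists n, Pn act n a.

Definition Ainv (G : Type) (A : pzRingType) (act : A -> G -> A) (a : A) : Prop :=
  forall g, act a g = a.
Arguments Dzero {G A} act n a.
Arguments Pn {G A} act n a.
Arguments Ppoly {G A} act a.
Arguments Ainv {G A} act a.

(* Main.v *)
Require Import Defs.
From HB Require Import structures.
From mathcomp Require Import all_boot all_order all_algebra.
Import GRing.Theory.
Local Open Scope ring_scope.


Fixpoint Eop (G : Type) (A : pzRingType) (act : A -> G -> A) (s : seq G) (c : A) : A :=
  match s with
  | [::] => c
  | x :: s' => @Eop G A act s' (act c x - c)
  end.

Arguments Eop {G A} act s c.
Set Implicit Arguments. Unset Strict Implicit.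

Lemma Eop_rcons (G : Type) (A : pzRingType) (act : A -> G -> A) s x c :
  Eop act (rcons s x) c = act (Eop act s c) x - Eop act s c.
Proof. by elim: s c => [|y s IH] c //=. Qed.

Lemma Dop_Eop (G : Type) (A : pzRingType) (act : A -> G -> A) n c (g : 'I_n -> G) :
  Dop act n c g = Eop act (map g (enum 'I_n)) c.
Proof.
elim: n g => [|n IH] g /=.
  by rewrite enum_ord0.
by rewrite IH enum_ordSr map_rcons Eop_rcons -map_comp.
Qed.

Definition Zk (G : Type) (A : pzRingType) (act : A -> G -> A) k c :=
  forall s : seq G, size s = k -> Eop act s c = 0.

Arguments Zk {G A} act k c.

Lemma Dzero_Zk (G : Type) (A : pzRingType) (act : A -> G -> A) (x0 : G) n c :
  Dzero act n c <-> Zk act n c.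
Proof.
split=> H.
  move=> s Hs; have := H (fun i : 'I_n => nth x0 s i); rewrite Dop_Eop.
  suff -> : map (fun i : 'I_n => nth x0 s i) (enum 'I_n) = s by [].
  rewrite (map_comp (nth x0 s) val) val_enum_ord -Hs.
  exact: mkseq_nth.
move=> g; rewrite Dop_Eop; apply: H; by rewrite size_map size_enum_ord.
Qed.

Lemma act0 (G : Type) mul e (A : pzRingType) (act : A -> G -> A)
  (Hact : right_ring_action mul e act) g : act 0 g = 0.
Proof.
apply: (@addrI _ (act 0 g)); by rewrite addr0 -(actD Hact) addr0.
Qed.

Lemma Eop0 (G : Type) mul e (A : pzRingType) (act : A -> G -> A)
  (Hact : right_ring_action mul e act) s : Eop act s 0 = 0.
Proof. by elim: s => [|x s IH] //=; rewrite (act0 Hact) subr0. Qed.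

Lemma EopB (G : Type) mul e (A : pzRingType) (act : A -> G -> A)
  (Hact : right_ring_action mul e act) s a b :
  Eop act s (a - b) = Eop act s a - Eop act s b.
Proof.
elim: s a b => [|x s IH] a b //=; rewrite -IH; congr Eop.
rewrite (actD Hact) (actN Hact) opprB.
rewrite addrA addrAC [RHS]addrAC opprB [in RHS]addrA addrAC.
by rewrite [act a x - act b x + b]addrAC.
Qed.

Lemma EopD (G : Type) mul e (A : pzRingType) (act : A -> G -> A)
  (Hact : right_ring_action mul e act) s a b :
  Eop act s (a + b) = Eop act s a + Eop act s b.
Proof.
have := EopB Hact s 0 b; rewrite (Eop0 Hact) !sub0r => HN.
by rewrite -[X in Eop act s (a + X)]opprK (EopB Hact) HN opprK.
Qed.

Lemma Eop_cat (G : Type) (A : pzRingType) (act : A -> G -> A) s t c :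
  Eop act (s ++ t) c = Eop act t (Eop act s c).
Proof. by elim: s c => [|x s IH] c //=. Qed.

Lemma Zk_mono (G : Type) mul e (A : pzRingType) (act : A -> G -> A)
  (Hact : right_ring_action mul e act) k j c : (k <= j)%N -> Zk act k c -> Zk act j c.
Proof.
move=> Hkj H s Hs.
by rewrite -(cat_take_drop k s) Eop_cat H ?(Eop0 Hact) // size_takel // Hs.
Qed.

Lemma ZkB (G : Type) mul e (A : pzRingType) (act : A -> G -> A)
  (Hact : right_ring_action mul e act) k a b : Zk act k a -> Zk act k b -> Zk act k (a - b).
Proof. by move=> Ha Hb s Hs; rewrite (EopB Hact) Ha ?Hb ?subr0. Qed.

Lemma ZkD (G : Type) mul e (A : pzRingType) (act : A -> G -> A)
  (Hact : right_ring_action mul e act) k a b : Zk act k a -> Zk act k b -> Zk act k (a + b).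
Proof. by move=> Ha Hb s Hs; rewrite (EopD Hact) Ha ?Hb ?addr0. Qed.

Lemma ZkS (G : Type) (A : pzRingType) (act : A -> G -> A) k c :
  Zk act k.+1 c <-> forall g, Zk act k (act c g - c).
Proof.
split=> H.
  by move=> g s Hs; apply: (H (g :: s)); rewrite /= Hs.
by case=> [|x s] //= [Hs]; apply: H.
Qed.

Lemma Zk0 (G : Type) (A : pzRingType) (act : A -> G -> A) c :
  Zk act 0 c <-> c = 0.
Proof. by split=> [H|->]; [apply: (H [::]) | case]. Qed.

Lemma delta_mul (G : Type) mul e (A : pzRingType) (act : A -> G -> A)
  (Hact : right_ring_action mul e act) a b g :
  act (a * b) g - a * b = act a g * (act b g - b) + (act a g - a) * b.
Proof.
by rewrite (actMr Hact) mulrBr mulrBl addrA subrK.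
Qed.

Lemma Zk_act (G : Type) mul e (A : pzRingType) (act : A -> G -> A)
  (Hact : right_ring_action mul e act) k a g : Zk act k a -> Zk act k (act a g).
Proof.
move=> H; have -> : act a g = a + (act a g - a) by rewrite addrC subrK.
apply: (ZkD Hact) => //; case: k H => [|k] H.
  by move/Zk0: (H) => ->; rewrite (act0 Hact) subr0; apply/Zk0.
by apply: (Zk_mono Hact (leqnSn k)); move/ZkS: H; apply.
Qed.

Lemma Zk_mul (G : Type) mul e (A : pzRingType) (act : A -> G -> A)
  (Hact : right_ring_action mul e act) k : forall m n a b, (m + n = k.+1)%N ->
  Zk act m a -> Zk act n b -> Zk act k (a * b).
Proof.
elim: k => [|k IH] m n a b Hmn Ha Hb.
  apply/Zk0; case: m Hmn Ha => [|m] Hmn Ha.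
    by move/Zk0: Ha => ->; rewrite mul0r.
  case: n Hmn Hb => [|n] Hmn Hb; last by rewrite addSn addnS in Hmn.
  by move/Zk0: Hb => ->; rewrite mulr0.
case: m Hmn Ha => [|m] Hmn Ha.
  by move/Zk0: Ha => ->; rewrite mul0r => s _; rewrite (Eop0 Hact).
case: n Hmn Hb => [|n] Hmn Hb.
  by move/Zk0: Hb => ->; rewrite mulr0 => s _; rewrite (Eop0 Hact).
apply/ZkS => g; rewrite (delta_mul Hact); apply: (ZkD Hact).
  apply: (IH m.+1 n); first by move/eqP: Hmn; rewrite addnS eqSS => /eqP.
    exact: (Zk_act Hact).
  by move/ZkS: Hb; apply.
apply: (IH m n.+1); first by move/eqP: Hmn; rewrite addSn eqSS => /eqP.
  by move/ZkS: Ha; apply.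
exact: Hb.
Qed.

Theorem proposition2p1 (G : Type) (mul : G -> G -> G) (e : G) (inv : G -> G)
    (A : pzRingType) (act : A -> G -> A)
    (HG : group_law mul e inv) (Hact : right_ring_action mul e act) :
  (* (a) *)
  (forall (a b : A) (g : G),
      Dop act 1 (a * b) (fun _ => g)
      = act a g * Dop act 1 b (fun _ => g) + Dop act 1 a (fun _ => g) * b) /\
  (* (b) *)
  (forall (m n : nat) (a b : A), (1 <= m + n)%N ->
      Dzero act m a -> Dzero act n b -> Dzero act (m + n - 1) (a * b)) /\
  (forall (m n : nat) (a b : A), Pn act m a -> Pn act n b -> Pn act (m + n) (a * b)) /\
  (* P(G,A) is a subring *)
  (Ppoly act 1 /\
   (forall a b : A, Ppoly act a -> Ppoly act b -> Ppoly act (a - b)) /\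
   (forall a b : A, Ppoly act a -> Ppoly act b -> Ppoly act (a * b))) /\
  (* (c) *)
  (forall (n : nat) (a : A), Ainv act a ->
      forall (b : A) (g : 'I_n -> G), Dop act n (a * b) g = a * Dop act n b g).

Proof.
have PM : forall (m n : nat) (a b : A), Pn act m a -> Pn act n b -> Pn act (m + n) (a * b).
  move=> m n a b Ha Hb; apply/(Dzero_Zk act e).
  move/(Dzero_Zk act e): Ha => Ha; move/(Dzero_Zk act e): Hb => Hb.
  by apply: (Zk_mul Hact _ Ha Hb); rewrite addSn addnS.
split.
  by move=> a b g /=; apply: (delta_mul Hact).
split.
  move=> m n a b H1 Ha Hb; apply/(Dzero_Zk act e).
  move/(Dzero_Zk act e): Ha => Ha; move/(Dzero_Zk act e): Hb => Hb.
  by apply: (Zk_mul Hact _ Ha Hb); rewrite subn1 prednK.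
split; first exact: PM.
split.
  split; first by exists 0%N => g /=; rewrite (actU Hact) subrr.
  split.
    move=> a b [m Ha] [n Hb]; exists (maxn m n); apply/(Dzero_Zk act e).
    move/(Dzero_Zk act e): Ha => Ha; move/(Dzero_Zk act e): Hb => Hb.
    apply: (ZkB Hact).
      by apply: (Zk_mono Hact _ Ha); rewrite ltnS leq_maxl.
    by apply: (Zk_mono Hact _ Hb); rewrite ltnS leq_maxr.
  by move=> a b [m Ha] [n Hb]; exists (m + n)%N; apply: PM.
move=> n a Ha b; elim: n => [|n IH] g //=.
by rewrite IH (actMr Hact) Ha mulrBr.
Qed.
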